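(* Consider the sequential decision problem described in the context. (1) Given $\mathbf q=(q_1,\dots,q_T)\in\mathcal Q_B$, let $f_t(y^{t-1})=q_t(\cdot\mid\cdot,\cdot,y^{t-1})$; then $\tilde L_T(\mathbf f)=L_T(\mathbf q)$. (2) Given a decision policy $\mathbf f=(f_1,\dots,f_T)$, let $\mathbf q\in\mathcal Q_B$ be $q_t(y_t\mid x_t,s_t,y^{t-1})=a_t(y_t\mid x_t,s_t)$ with $a_t=f_t(y^{t-1})$; then $L_T(\mathbf q)=\tilde L_T(\mathbf f)$. Hence the sequential problem is equivalent to minimizing $L_T$ over $\mathcal Q_B$.
   Context: Let $\mathcal X=\{0,\dots,m_x\}$, $\mathcal Y=\{0,\dots,m_y\}$, $\mathcal S=\{0,\dots,m_s\}$ with $m_x\le m_y$. The demand $\{X_t\}$ is a time-homogeneous first-order Markov chain on $\mathcal X$ with transition matrix $Q$ and initial pmf $P_{X_1}$; $S_1\sim P_{S_1}$ independent of $\{X_t\}$. For an integer $w$ let $\mathcal Y_\circ(w)=\{y\in\mathcal Y:w+y\in\mathcal S\}$. $\mathcal Q_B$ is the set of charging policies $q_t(y\mid x_t,s_t,y^{t-1})$ (conditional pmfs on $\mathcal Y$ with $q_t(\mathcal Y_\circ(s_t-x_t)\mid x_t,s_t,y^{t-1})=1$), inducing $Y_t\sim q_t(\cdot\mid X_t,S_t,Y^{t-1})$, $S_{t+1}=S_t+Y_t-X_t$, and $L_T(\mathbf q)=\frac1TI^{\mathbf q}(X^T,S_1;Y^T)$. $\mathcal A$ is the set of conditional pmfs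 $a(y\mid x,s)$ with $a(\mathcal Y_\circ(s-x)\mid x,s)=1$ for all $(x,s)$. Sequential problem: a decision maker observes $Y^{t-1}$ and chooses $A_t=f_t(Y^{t-1})\in\mathcal A$; then $Y_t\sim A_t(\cdot\mid X_t,S_t)$ and $S_{t+1}=S_t+Y_t-X_t$. The per-step cost is $c_t(x_t,s_t,a_t,y^t;\mathbf f)=\log\frac{a_t(y_t\mid x_t,s_t)}{P^{\mathbf f}(Y_t=y_t\mid Y^{t-1}=y^{t-1})}$ and $\tilde L_T(\mathbf f)=\frac1T\mathbb E^{\mathbf f}\big[\sum_{t=1}^Tc_t(X_t,S_t,A_t,Y^t;\mathbf f)\big]$. *)

(* Defs.v *)
From HB Require Import structures.
From mathcomp Require Import all_boot all_order all_algebra.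
From mathcomp Require Import reals exp.
Set Implicit Arguments. Unset Strict Implicit. Unset Printing Implicit Defensive.
Import Order.TTheory GRing.Theory Num.Theory.
Local Open Scope ring_scope.

(* Alphabets: X = {0..mx}, Y = {0..my}, S = {0..ms}; times t = 1..T are
   encoded 0-indexed as t : 'I_T (time t+1), histories y^{t-1} as the list of
   the first t outputs. *)

Section Model.
Variables (R : realType) (mx my ms T : nat).
Local Notation X := 'I_mx.+1.
Local Notation Y := 'I_my.+1.
Local Notation S := 'I_ms.+1.

(* y \in Y_o(s - x)  <=>  0 <= s - x + y <= ms *)
Definition inYo (s x y : nat) : bool := (x <= s + y)%N && (s + y - x <= ms)%N.

Definition cond_pmf_A (a : X -> S -> Y -> R) : Prop :=
  forall (x : X) (s : S),
    (forall y, 0 <= a x s y) /\ \sum_(y : Y) a x s y = 1 /\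
    \sum_(y : Y | inYo s x y) a x s y = 1.

Definition in_QB (q : nat -> X -> S -> seq Y -> Y -> R) : Prop :=
  forall t : nat, (t < T)%N -> forall (h : seq Y), size h = t ->
    cond_pmf_A (fun x s y => q t x s h y).

Definition decision_policy (f : nat -> seq Y -> (X -> S -> Y -> R)) : Prop :=
  forall t : nat, (t < T)%N -> forall (h : seq Y), size h = t -> cond_pmf_A (f t h).

Definition is_pmf (I : finType) (p : I -> R) : Prop :=
  (forall i, 0 <= p i) /\ \sum_i p i = 1.

Definition stochastic (Q : X -> X -> R) : Prop := forall x, is_pmf (Q x).

Definition traj := ({ffun 'I_T -> X} * S * {ffun 'I_T -> Y})%type.

Definition seqf (A : Type) (u : {ffun 'I_T -> A}) : seq A := [seq u i | i <- enum 'I_T].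

Definition hist (ys : {ffun 'I_T -> Y}) (t : nat) : seq Y := take t (seqf ys).

(* S_{t+1} = S_t + Y_t - X_t, i.e. state at (0-indexed) time t *)
Definition stateZ (xs : {ffun 'I_T -> X}) (s1 : S) (ys : {ffun 'I_T -> Y}) (t : nat)
  : int := (s1 : nat)%:Z + \sum_(i < T | (i < t)%N) ((ys i : nat)%:Z - (xs i : nat)%:Z).

(* the state as an element of S (only used on trajectories where it lies in S;
   elsewhere the trajectory has probability 0) *)
Definition stateS xs s1 ys t : S := inord `|stateZ xs s1 ys t|%N.

Fixpoint chain_prob (Q : X -> X -> R) (prev : X) (l : seq X) : R :=
  if l is x :: l' then Q prev x * chain_prob Q x l' else 1.

Definition markov_prob (P1 : X -> R) (Q : X -> X -> R) (l : seq X) : R :=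
  if l is x :: l' then P1 x * chain_prob Q x l' else 1.

Variables (PX1 : X -> R) (Q : X -> X -> R) (PS1 : S -> R).

Definition Pq (q : nat -> X -> S -> seq Y -> Y -> R) (w : traj) : R :=
  let: (xs, s1, ys) := w in
  markov_prob PX1 Q (seqf xs) * PS1 s1 *
  \prod_(t < T) q t (xs t) (stateS xs s1 ys t) (hist ys t) (ys t).

Definition mutual_info (P : traj -> R) : R :=
  \sum_(w : traj)
    if 0 < P w then
      P w * ln (P w / ((\sum_(w' : traj | (w'.1 == w.1)) P w') *
                       (\sum_(w' : traj | (w'.2 == w.2)) P w')))
    else 0.

Definition L_T (q : nat -> X -> S -> seq Y -> Y -> R) : R :=
  (T%:R)^-1 * mutual_info (Pq q).

Definition Pf (f : nat -> seq Y -> (X -> S -> Y -> R)) (w : traj) : R :=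
  let: (xs, s1, ys) := w in
  markov_prob PX1 Q (seqf xs) * PS1 s1 *
  \prod_(t < T) (f t (hist ys t)) (xs t) (stateS xs s1 ys t) (ys t).

Definition PY_prefix (f : nat -> seq Y -> (X -> S -> Y -> R)) (t : nat) (ys : {ffun 'I_T -> Y}) : R :=
  \sum_(w : traj | hist w.2 t == hist ys t) Pf f w.

Definition cost (f : nat -> seq Y -> (X -> S -> Y -> R)) (t : 'I_T) (w : traj) : R :=
  let: (xs, s1, ys) := w in
  ln ((f t (hist ys t)) (xs t) (stateS xs s1 ys t) (ys t) /
      (PY_prefix f t.+1 ys / PY_prefix f t ys)).

Definition Ltilde_T (f : nat -> seq Y -> (X -> S -> Y -> R)) : R :=
  (T%:R)^-1 * \sum_(w : traj) (if 0 < Pf f w then Pf f w * \sum_(t < T) cost f t w else 0).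

End Model.

(* Main.v *)
Require Import Defs.
From HB Require Import structures.
From mathcomp Require Import all_boot all_order all_algebra.
From mathcomp Require Import reals exp.
From mathcomp Require Import zify ring lra.
Set Implicit Arguments. Unset Strict Implicit. Unset Printing Implicit Defensive.
Import Order.TTheory GRing.Theory Num.Theory.
Local Open Scope ring_scope.

Section Gen.
Variables (R : realType) (T : nat).

Lemma size_seqf (A : Type) (u : {ffun 'I_T -> A}) : size (seqf u) = T.
Proof. by rewrite size_map size_enum_ord. Qed.

Lemma nth_seqf (A : Type) d (u : {ffun 'I_T -> A}) (j : 'I_T) : nth d (seqf u) j = u j.
Proof. by rewrite /seqf (nth_map j) ?size_enum_ord // nth_ord_enum. Qed.

Lemma nth_seqf_lt (A : Type) d (u : {ffun 'I_T -> A}) (j : nat) (hj : (j < T)%N) :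
  nth d (seqf u) j = u (Ordinal hj).
Proof. exact: (nth_seqf d u (Ordinal hj)). Qed.

Definition upd (A : finType) (u : {ffun 'I_T -> A}) (t : 'I_T) (a : A) : {ffun 'I_T -> A} :=
  [ffun i => if i == t then a else u i].

Lemma gen_sum (A : finType) (G : 'I_T -> {ffun 'I_T -> A} -> R) (u0 : {ffun 'I_T -> A}) :
  (forall (t : 'I_T) (v w : {ffun 'I_T -> A}), (forall i : 'I_T, (i <= t)%N -> v i = w i) -> G t v = G t w) ->
  (forall (t : 'I_T) (u : {ffun 'I_T -> A}), \sum_a G t (upd u t a) = 1) ->
  \sum_v \prod_t G t v = 1.
Proof.
move=> hdep hsum.
have key : forall m k, (k + m = T)%N -> forall u : {ffun 'I_T -> A},
  \sum_(v : {ffun 'I_T -> A} | [forall i : 'I_T, (i < k)%N ==> (v i == u i)])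
     \prod_(t : 'I_T | (k <= t)%N) G t v = 1.
  elim=> [|m IH] k hk u.
    rewrite addn0 in hk; subst k.
    rewrite (eq_bigl (fun v : {ffun 'I_T -> A} => v == u)); last first.
      move=> v; apply/forallP/eqP => [H|->]; last by move=> i; rewrite eqxx implybT.
      by apply/ffunP => i; have := H i; rewrite ltn_ord => /eqP.
    rewrite big_pred1_eq big_pred0 // => t; by rewrite leqNgt ltn_ord.
  have hkT : (k < T)%N by rewrite -hk; lia.
  pose kk := Ordinal hkT.
  rewrite (partition_big (fun v : {ffun 'I_T -> A} => v kk) xpredT) //=.
  rewrite -[RHS](hsum kk u); apply: eq_bigr => a _.
  rewrite (eq_bigr (fun v : {ffun 'I_T -> A} => G kk (upd u kk a) * \prod_(t : 'I_T | (k.+1 <= t)%N) G t v)); last first.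
    move=> v /andP [/forallP Hv /eqP Hk].
    rewrite (bigD1 kk) //=; congr (_ * _).
      apply: hdep => i hi; rewrite ffunE.
      case: eqP => [->|/eqP ne]; first by [].
      have hi' : (i < k)%N by rewrite ltn_neqAle hi andbT; apply: contra ne => /eqP e; apply/eqP/val_inj.
      by have := Hv i; rewrite hi' => /eqP.
    apply: eq_bigl => t; rewrite -(inj_eq val_inj) /=; lia.
  rewrite -big_distrr /=.
  have hk1 : (k.+1 + m)%N = T by lia.
  rewrite -[RHS]mulr1; congr (_ * _).
  apply: eq_trans (IH k.+1 hk1 (upd u kk a)).
  apply: eq_bigl => v; apply/andP/forallP.
    move=> [/forallP Hv /eqP Hk] i; apply/implyP => hi; rewrite ffunE.
    case: (i =P kk) => [->|/eqP ne]; first by rewrite Hk.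
    have hi' : (i < k)%N by rewrite ltn_neqAle -ltnS hi andbT; apply: contra ne => /eqP e; apply/eqP/val_inj.
    by have := Hv i; rewrite hi'.
  move=> H; split.
    apply/forallP => i; apply/implyP => hi; have := H i; rewrite ltnW // /= ffunE.
    by case: (i =P kk) => [e|//]; move: hi; rewrite e /= ltnn.
  by have := H kk; rewrite /= ltnSn /= ffunE eqxx.
apply: eq_trans (key T 0 (add0n _) u0); apply: eq_big => [v|v _].
  by apply/esym/forallP => i.
by apply: eq_bigl.
Qed.
End Gen.

Section Main.
Variables (R : realType) (mx my ms T : nat).
Local Notation X := 'I_mx.+1.
Local Notation Y := 'I_my.+1.
Local Notation S := 'I_ms.+1.
Variables (PX1 : X -> R) (Q : X -> X -> R) (PS1 : S -> R).
Hypotheses (hPX1 : is_pmf PX1) (hQ : stochastic Q) (hPS1 : is_pmf PS1).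

Lemma chain_prod (d : X) p l :
  chain_prob Q p l = \prod_(i < size l) Q (nth d (p :: l) i) (nth d l i).
Proof.
elim: l p => [|x l IH] p /=; first by rewrite big_ord0.
by rewrite big_ord_recl /= IH.
Qed.

Lemma markov_prod (d : X) l : markov_prob PX1 Q l =
  \prod_(i < size l) (if (i == 0 :> nat)%N then PX1 (nth d l i) else Q (nth d l i.-1) (nth d l i)).
Proof.
case: l => [|x l] /=; first by rewrite big_ord0.
by rewrite big_ord_recl /= (chain_prod d).
Qed.

Lemma big_ord_size (n m : nat) (F : nat -> R) : n = m ->
  \prod_(i < n) F i = \prod_(i < m) F i.
Proof. by move->. Qed.

Definition GM (t : 'I_T) (v : {ffun 'I_T -> X}) : R :=
  if (t == 0 :> nat)%N then PX1 (v t) else Q (nth ord0 (seqf v) t.-1) (v t).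

Lemma markov_seqf xs : markov_prob PX1 Q (seqf xs) = \prod_t GM t xs.
Proof.
rewrite (markov_prod ord0).
rewrite (@big_ord_size _ _ (fun i : nat => if (i == 0)%N then PX1 (nth ord0 (seqf xs) i)
   else Q (nth ord0 (seqf xs) i.-1) (nth ord0 (seqf xs) i)) (size_seqf xs)).
by apply: eq_bigr => t _; rewrite /GM !nth_seqf.
Qed.

Lemma markov_ge0 l : 0 <= markov_prob PX1 Q l.
Proof.
rewrite (markov_prod ord0); apply: prodr_ge0 => i _.
case: ifP => _; [exact: hPX1.1 | exact: (hQ _).1].
Qed.

Lemma sum_markov : \sum_(xs : {ffun 'I_T -> X}) markov_prob PX1 Q (seqf xs) = 1.
Proof.
rewrite (eq_bigr (fun xs => \prod_t GM t xs)); last by move=> xs _; exact: markov_seqf.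
apply: (@gen_sum R T X GM [ffun=> ord0]).
  move=> t v w H; rewrite /GM H //; case: ifP => // t0.
  have ht : (t.-1 < T)%N by apply: leq_ltn_trans (ltn_ord t); exact: leq_pred.
  by rewrite (nth_seqf_lt ord0 v ht) (nth_seqf_lt ord0 w ht) H //= leq_pred.
move=> t u; have [t0|t0] := boolP (t == 0 :> nat).
  apply: eq_trans (proj2 hPX1); apply: eq_bigr => a _; by rewrite /GM t0 ffunE eqxx.
have ht : (t.-1 < T)%N by apply: leq_ltn_trans (ltn_ord t); exact: leq_pred.
apply: eq_trans (proj2 (hQ (u (Ordinal ht)))); apply: eq_bigr => a _.
rewrite /GM (negbTE t0) (nth_seqf_lt ord0 _ ht) !ffunE eqxx.
case: (Ordinal ht =P t) => // /(congr1 val) /= e.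
by move: t0 e; lia.
Qed.

Lemma size_hist (u : {ffun 'I_T -> Y}) (t : nat) : (t <= T)%N -> size (hist u t) = t.
Proof. by move=> ht; rewrite /hist size_takel // size_seqf. Qed.

Lemma hist_dep (v w : {ffun 'I_T -> Y}) (t : nat) :
  (forall i : 'I_T, (i < t)%N -> v i = w i) -> hist v t = hist w t.
Proof.
move=> H; rewrite /hist; apply: (@eq_from_nth _ ord0); first by rewrite !size_take !size_seqf.
move=> j; rewrite size_take size_seqf => hj.
have [hjt hjT] : (j < t)%N /\ (j < T)%N by move: hj; case: ifP => h hj; split => //; lia.
by rewrite !nth_take // (nth_seqf_lt _ _ hjT) (nth_seqf_lt _ _ hjT) H.
Qed.

Lemma stateS_dep (xs : {ffun 'I_T -> X}) (s1 : S) (v w : {ffun 'I_T -> Y}) (t : nat) :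
  (forall i : 'I_T, (i < t)%N -> v i = w i) -> stateS xs s1 v t = stateS xs s1 w t.
Proof.
move=> H; rewrite /stateS /stateZ.
by rewrite (eq_bigr (fun i => (w i : nat)%:Z - (xs i : nat)%:Z)) // => i hi; rewrite H.
Qed.

Variable f : nat -> seq Y -> (X -> S -> Y -> R).
Hypothesis hf : decision_policy T f.

Definition GY (xs : {ffun 'I_T -> X}) (s1 : S) (t : 'I_T) (v : {ffun 'I_T -> Y}) : R :=
  f t (hist v t) (xs t) (stateS xs s1 v t) (v t).

Lemma GY_ge0 xs s1 t v : 0 <= GY xs s1 t v.
Proof. exact: ((hf (ltn_ord t) (size_hist v (ltnW (ltn_ord t)))) (xs t) (stateS xs s1 v t)).1. Qed.

Lemma sum_A xs s1 : \sum_(ys : {ffun 'I_T -> Y}) \prod_t GY xs s1 t ys = 1.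
Proof.
apply: (@gen_sum R T Y (GY xs s1) [ffun=> ord0]).
  move=> t v w H; have H' : forall i : 'I_T, (i < t)%N -> v i = w i.
    by move=> i hi; apply: H; exact: ltnW.
  by rewrite /GY (hist_dep H') (stateS_dep _ _ H') H.
move=> t u.
have H' : forall a, forall i : 'I_T, (i < t)%N -> upd u t a i = u i.
  move=> a i hi; rewrite ffunE; case: eqP => // e; by move: hi; rewrite e ltnn.
apply: eq_trans ((hf (ltn_ord t) (size_hist u (ltnW (ltn_ord t)))) (xs t) (stateS xs s1 u t)).2.1.
apply: eq_bigr => a _.
by rewrite /GY (hist_dep (H' a)) (stateS_dep _ _ (H' a)) ffunE eqxx.
Qed.


Local Notation P := (@Pf R mx my ms T PX1 Q PS1 f).

Lemma Pf_eq xs s1 ys : P (xs, s1, ys) =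
  markov_prob PX1 Q (seqf xs) * PS1 s1 * \prod_t GY xs s1 t ys.
Proof. by []. Qed.

Lemma P_ge0 w : 0 <= P w.
Proof.
case: w => [[xs s1] ys]; rewrite Pf_eq.
apply: mulr_ge0; first by apply: mulr_ge0; [exact: markov_ge0 | exact: (proj1 hPS1)].
by apply: prodr_ge0 => t _; exact: GY_ge0.
Qed.

Lemma sum_traj (F : traj mx my ms T -> R) :
  \sum_w F w = \sum_xs \sum_s1 \sum_ys F (xs, s1, ys).
Proof.
symmetry; rewrite pair_bigA pair_bigA /=.
by apply: eq_bigr => [[[xs s1] ys]] _.
Qed.

Lemma tot : \sum_w P w = 1.
Proof.
rewrite sum_traj; apply: eq_trans sum_markov; apply: eq_bigr => xs _.
rewrite (eq_bigr (fun s1 => markov_prob PX1 Q (seqf xs) * PS1 s1)); last first.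
  move=> s1 _; rewrite (eq_bigr (fun ys => markov_prob PX1 Q (seqf xs) * PS1 s1 * \prod_t GY xs s1 t ys)) //.
  by rewrite -big_distrr /= sum_A mulr1.
by rewrite -big_distrr /= (proj2 hPS1) mulr1.
Qed.

Lemma marg1 xs s1 : \sum_(w | w.1 == (xs, s1)) P w = markov_prob PX1 Q (seqf xs) * PS1 s1.
Proof.
transitivity (\sum_(p : {ffun 'I_T -> X} * S | p == (xs, s1))
               \sum_(ys : {ffun 'I_T -> Y} | true) P (p, ys)).
  rewrite pair_big_dep; apply: eq_big => [[p ys]|[p ys] _] /=; [by rewrite andbT | by []].
rewrite big_pred1_eq.
rewrite (eq_bigr (fun ys => markov_prob PX1 Q (seqf xs) * PS1 s1 * \prod_t GY xs s1 t ys)) //.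
by rewrite -big_distrr /= sum_A mulr1.
Qed.

Lemma hist_T_eq (u v : {ffun 'I_T -> Y}) : (hist u T == hist v T) = (u == v).
Proof.
rewrite /hist !take_oversize ?size_seqf //; apply/eqP/eqP => [E|->//].
by apply/ffunP => i; rewrite -(nth_seqf (u i) u) -(nth_seqf (u i) v) E.
Qed.

Lemma marg2 ys : \sum_(w | w.2 == ys) P w = PY_prefix PX1 Q PS1 f T ys.
Proof. by rewrite /PY_prefix; apply: eq_bigl => w; rewrite hist_T_eq. Qed.

Lemma PY0 (ys : {ffun 'I_T -> Y}) : PY_prefix PX1 Q PS1 f 0 ys = 1.
Proof. by rewrite /PY_prefix; apply: eq_trans tot; apply: eq_bigl => w; rewrite /hist !take0 eqxx. Qed.

Lemma PYpos w t : 0 < P w -> 0 < PY_prefix PX1 Q PS1 f t w.2.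
Proof.
move=> Pw; rewrite /PY_prefix (bigD1 w) //=.
have : 0 <= \sum_(i | (hist i.2 t == hist w.2 t) && (i != w)) P i.
  by apply: sumr_ge0 => i _; exact: P_ge0.
lra.
Qed.

Lemma lnDiv (a b : R) : 0 < a -> 0 < b -> ln (a / b) = ln a - ln b.
Proof. by move=> ha hb; apply: ln_div; rewrite posrE. Qed.

Lemma ln_prod (I : finType) (g : I -> R) : (forall i, 0 < g i) ->
  ln (\prod_i g i) = \sum_i ln (g i).
Proof.
move=> hg.
suff : 0 < \prod_i g i /\ ln (\prod_i g i) = \sum_i ln (g i) by case.
apply: (big_ind2 (fun a b => 0 < a /\ ln a = b)).
- by rewrite ln1.
- move=> x1 x2 y1 y2 [hx <-] [hy <-]; split; first exact: mulr_gt0.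
  by apply: lnM; rewrite posrE.
- by move=> i _; split.
Qed.

Lemma term xs s1 ys : 0 < P (xs, s1, ys) ->
  ln (P (xs, s1, ys) / ((\sum_(w | w.1 == (xs, s1)) P w) * (\sum_(w | w.2 == ys) P w)))
  = \sum_(t < T) cost PX1 Q PS1 f t (xs, s1, ys).
Proof.
move=> Pw; rewrite marg1 marg2.
set M := markov_prob PX1 Q (seqf xs) * PS1 s1.
set A := \prod_t GY xs s1 t ys.
have EP : P (xs, s1, ys) = M * A by [].
have M0 : 0 <= M by apply: mulr_ge0; [exact: markov_ge0 | exact: (proj1 hPS1)].
have A0 : 0 <= A by apply: prodr_ge0 => t _; exact: GY_ge0.
have Mp : 0 < M.
  rewrite lt_neqAle M0 andbT eq_sym; apply/eqP => e; move: Pw; by rewrite EP e mul0r ltxx.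
have Ap : 0 < A.
  rewrite lt_neqAle A0 andbT eq_sym; apply/eqP => e; move: Pw; by rewrite EP e mulr0 ltxx.
have Gp : forall t, 0 < GY xs s1 t ys.
  move=> t; rewrite lt_neqAle GY_ge0 andbT eq_sym; apply/eqP => e.
  by move: Ap; rewrite /A (bigD1 t) //= e mul0r ltxx.
have PYp : forall n, 0 < PY_prefix PX1 Q PS1 f n ys.
  by move=> n; exact: (PYpos n Pw).
have -> : P (xs, s1, ys) / (M * PY_prefix PX1 Q PS1 f T ys) = A / PY_prefix PX1 Q PS1 f T ys.
  rewrite EP; field; apply/andP; split; rewrite gt_eqF //.
rewrite lnDiv // /A ln_prod //.
rewrite [RHS](eq_bigr (fun t : 'I_T => ln (GY xs s1 t ys) -
    (ln (PY_prefix PX1 Q PS1 f t.+1 ys) - ln (PY_prefix PX1 Q PS1 f t ys)))); last first.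
  move=> t _; rewrite /cost -/(GY xs s1 t ys) lnDiv // ?divr_gt0 // lnDiv //.
rewrite sumrB.
rewrite -(big_mkord xpredT (fun t => ln (PY_prefix PX1 Q PS1 f t.+1 ys) - ln (PY_prefix PX1 Q PS1 f t ys))).
by rewrite telescope_sumr // PY0 ln1 subr0.
Qed.

Lemma main_eq : mutual_info P =
  \sum_w (if 0 < P w then P w * \sum_(t < T) cost PX1 Q PS1 f t w else 0).
Proof.
rewrite /mutual_info; apply: eq_bigr => [[[xs s1] ys]] _.
by case: ifP => // Pw; rewrite term.
Qed.

End Main.

Theorem proposition2 (R : realType) (mx my ms T : nat) (hxy : (mx <= my)%N)
    (hT : (0 < T)%N)
    (PX1 : 'I_mx.+1 -> R) (Q : 'I_mx.+1 -> 'I_mx.+1 -> R) (PS1 : 'I_ms.+1 -> R)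
    (hPX1 : is_pmf PX1) (hQ : stochastic Q) (hPS1 : is_pmf PS1) :
  (forall q : nat -> 'I_mx.+1 -> 'I_ms.+1 -> seq 'I_my.+1 -> 'I_my.+1 -> R,
     in_QB T q ->
     Ltilde_T T PX1 Q PS1 (fun t h => fun x s y => q t x s h y) = L_T T PX1 Q PS1 q) /\
  (forall f : nat -> seq 'I_my.+1 -> ('I_mx.+1 -> 'I_ms.+1 -> 'I_my.+1 -> R),
     decision_policy T f ->
     L_T T PX1 Q PS1 (fun t x s h y => f t h x s y) = Ltilde_T T PX1 Q PS1 f).
Proof.
split.
  move=> q hq; rewrite /Ltilde_T /L_T.
  by rewrite (main_eq hPX1 hQ hPS1 (f := fun t h => fun x s y => q t x s h y)).
move=> f hf; rewrite /Ltilde_T /L_T.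
by rewrite -(main_eq hPX1 hQ hPS1 hf).
Qed.
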